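(* Fix probability distributions $P$ and $Q$ on a common measurable space. Then the function $\gamma\mapsto D_{\infty,\gamma}(P,Q)$ is non-decreasing on $\gamma>0$.
   Context: The Tsallis $\gamma$-logarithm is $\log_\gamma(x)=\log x$ if $\gamma=1$ and $\log_\gamma(x)=\frac{x^{1-\gamma}-1}{1-\gamma}$ if $\gamma\ne1$, for $x\ge0$. The Tsallis $\gamma$-max-divergence is $D_{\infty,\gamma}(P,Q)=\sup_B\log_\gamma(P(B))-\log_\gamma(Q(B))$, supremum over measurable sets $B$. *)

(* Defs.v *)
From HB Require Import structures.
From mathcomp Require Import all_boot all_order all_algebra.
From mathcomp Require Import all_classical all_reals all_analysis.
Set Implicit Arguments. Unset Strict Implicit. Unset Printing Implicit Defensive.
Import Order.TTheory GRing.Theory Num.Theory.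
Local Open Scope classical_set_scope.
Local Open Scope ring_scope.

(* Tsallis gamma-logarithm on [0, +oo), extended-real valued:
   log_1 x = ln x, log_g x = (x^(1-g) - 1)/(1-g) for g <> 1.
   At x = 0 the value is -oo when g >= 1 (limit), and -1/(1-g) when g < 1
   (which powR gives directly since 0 `^ a = 0 for a <> 0). *)
Definition tlog (R : realType) (g x : R) : \bar R :=
  if (x == 0) && (1 <= g) then -oo%E
  else (if g == 1 then ln x else (x `^ (1 - g) - 1) / (1 - g))%:E.

(* Tsallis gamma-max-divergence: sup over measurable sets B of
   log_g(P B) - log_g(Q B) (in \bar R; mathcomp's convention -oo + +oo = -oo). *)
Definition tsallis_maxdiv (d : measure_display) (T : measurableType d)
  (R : realType) (g : R) (P Q : probability T R) : \bar R :=
  ereal_sup [set (tlog g (fine (P B)) - tlog g (fine (Q B)))%E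
            | B in [set B : set T | measurable B]].

(* Main.v *)
Require Import Defs.
From HB Require Import structures.
From mathcomp Require Import all_boot all_order all_algebra.
From mathcomp Require Import all_classical all_reals all_analysis.
From mathcomp Require Import ring lra.
Import Order.TTheory GRing.Theory Num.Theory.
Local Open Scope ring_scope.
Local Open Scope classical_set_scope.

Section S.
Variable R : realType.

Definition L (g x : R) : R :=
  if g == 1 then ln x else (x `^ (1 - g) - 1) / (1 - g).

Lemma L_derive (g x : R) : 0 < x -> is_derive x 1 (L g) (x `^ (-g)).
Proof.
move=> x0; rewrite /L; case: eqP => [->|/eqP g1].
  rewrite powR_inv1 ?ltW //. exact: is_derive1_ln.
have h1 : 1 - g != 0 by rewrite subr_eq0 eq_sym.
have -> : (fun y : R => (y `^ (1 - g) - 1) / (1 - g)) =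
   (1-g)^-1 \*: ((@powR R ^~ (1-g)) - cst 1).
  by apply: funext => y; rewrite /= mulrC.
apply: is_derive_eq.
  apply: is_deriveZ; apply: is_deriveB; exact: is_derive1_powR.
rewrite subr0 /GRing.scale /= mulrA mulVf // mul1r; congr (_ `^ _); ring.
Qed.


Lemma mono_pos (f f' : R -> R) :
  (forall x : R, 0 < x -> is_derive x 1 f (f' x)) ->
  (forall x : R, 0 < x -> x <= 1 -> 0 <= f' x) ->
  forall q p : R, 0 < q -> q <= p -> p <= 1 -> f q <= f p.
Proof.
move=> df f'0 q p q0 qp p1.
apply: (@ger0_derive1_ndecr _ f q p) => //.
- move=> x; rewrite in_itv /= => /andP[qx _].
  have := df x (lt_trans q0 qx); case=> //.
- move=> x; rewrite in_itv /= => /andP[qx xp].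
  have x0 := lt_trans q0 qx.
  rewrite derive1E; have [_ ->] := df x x0; apply: f'0 => //; exact: le_trans (ltW xp) p1.
- apply: derivable_within_continuous => x; rewrite in_itv /= => /andP[qx _].
  by have [] := df x (lt_le_trans q0 qx).
Qed.

Lemma L_mono (g q p : R) : 0 < q -> q <= p -> p <= 1 -> L g q <= L g p.
Proof.
apply: (@mono_pos (L g) (fun x => x `^ (-g))); first exact: L_derive.
by move=> x _ _; exact: powR_ge0.
Qed.

Lemma L_diff (g1 g2 q p : R) : g1 <= g2 -> 0 < q -> q <= p -> p <= 1 ->
  L g1 p - L g1 q <= L g2 p - L g2 q.
Proof.
move=> g12 q0 qp p1.
have h : (L g2 - L g1) q <= (L g2 - L g1) p.
  apply: (@mono_pos _ (fun x => x `^ (-g2) - x `^ (-g1))) => //.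
  - by move=> x x0; apply: is_deriveB; apply: L_derive.
  - move=> x x0 x1; rewrite subr_ge0; apply: ger_powR; first by rewrite x0 x1.
    by rewrite lerN2.
rewrite !fctE in h *; lra.
Qed.


Lemma tlogE (g x : R) : (x != 0) || (g < 1) -> tlog g x = (L g x)%:E.
Proof.
move=> h; rewrite /tlog /L; case: ifP => // /andP[/eqP x0 g1].
by move: h; rewrite x0 eqxx /= ltNge g1.
Qed.

Lemma tlog0 (g : R) : 1 <= g -> tlog g 0 = -oo%E.
Proof. by move=> g1; rewrite /tlog eqxx g1. Qed.

Lemma L0 (g : R) : g < 1 -> L g 0 = - (1 - g)^-1.
Proof.
move=> g1; rewrite /L lt_eqF // powR0; last by rewrite subr_eq0 eq_sym lt_eqF.
by rewrite sub0r mulNr mul1r.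
Qed.

Lemma key (g1 g2 : R) (p q : R) : 0 < g1 -> g1 <= g2 -> 0 <= p <= 1 -> 0 <= q <= 1 ->
  (tlog g1 p - tlog g1 q <= 0)%E \/
  (tlog g1 p - tlog g1 q <= tlog g2 p - tlog g2 q)%E.
Proof.
move=> g10 g12 /andP[p0 p1] /andP[q0 q1].
have [pq|qp] := leP p q.
  left.
  have [g1ge|g1lt] := leP 1 g1.
    have [->|pn0] := eqVneq p 0.
      by rewrite tlog0 // addNye.
    have qn0 : q != 0 by rewrite gt_eqF // (lt_le_trans _ pq) // lt_neqAle eq_sym pn0.
    rewrite !tlogE ?pn0 ?qn0 // -EFinB lee_fin subr_le0.
    by apply: L_mono => //; rewrite lt_neqAle eq_sym pn0.
  rewrite !tlogE ?g1lt ?orbT // -EFinB lee_fin subr_le0.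
  have [->|pn0] := eqVneq p 0.
    rewrite L0 // /L lt_eqF //.
    have a0 : 0 < 1 - g1 by rewrite subr_gt0.
    rewrite ler_pdivlMr // mulNr mulVf ?gt_eqF //.
    by rewrite lerBrDr addNr powR_ge0.
  by apply: L_mono => //; rewrite lt_neqAle eq_sym pn0.
right.
have pn0 : p != 0 by rewrite gt_eqF // (le_lt_trans q0 qp).
have [->|qn0] := eqVneq q 0.
  have [g2ge|g2lt] := leP 1 g2.
    by rewrite (@tlog0 g2 g2ge) (@tlogE g2 p) ?pn0 // leey.
  have g1lt : g1 < 1 by apply: le_lt_trans g2lt.
  rewrite !tlogE ?g1lt ?g2lt ?orbT // -!EFinB lee_fin !L0 // /L !lt_eqF //.
  have a1 : 0 < 1 - g1 by rewrite subr_gt0.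
  have a2 : 0 < 1 - g2 by rewrite subr_gt0.
  have hE : forall a : R, 0 < a -> (p `^ a - 1) / a - - a^-1 = p `^ a / a.
    by move=> a a0; rewrite opprK mulrBl mul1r subrK.
  rewrite (hE _ a1) (hE _ a2).
  apply: ler_pM.
  - exact: powR_ge0.
  - by rewrite invr_ge0 ltW.
  - apply: ger_powR; first by rewrite (le_lt_trans q0 qp) p1.
    by rewrite lerB.
  - by rewrite lef_pV2 ?posrE // lerB.
rewrite !tlogE ?pn0 ?qn0 // -!EFinB lee_fin.
apply: L_diff => //; first by rewrite lt_neqAle eq_sym qn0.
exact: ltW.
Qed.
End S.

Theorem proposition2 (d : measure_display) (T : measurableType d) (R : realType)
  (P Q : probability T R) (g1 g2 : R) :
  0 < g1 -> g1 <= g2 ->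
  (tsallis_maxdiv g1 P Q <= tsallis_maxdiv g2 P Q)%E.
Proof.
move=> g10 g12.
have inP : forall (M : probability T R) B, measurable B -> 0 <= fine (M B) <= 1.
  move=> M B mB; apply/andP; split; first by apply: fine_ge0.
  have := probability_le1 M mB; have := measure_ge0 M B.
  by case: (M B) => //= r; rewrite !lee_fin.
have ge0 : (0 <= tsallis_maxdiv g2 P Q)%E.
  apply: ereal_sup_ubound; exists setT; first exact: measurableT.
  by rewrite !probability_setT /= tlogE ?oner_neq0 // subee.
rewrite {1}/tsallis_maxdiv; apply: ge_ereal_sup => _ [B mB <-].
case: (@key R g1 g2 (fine (P B)) (fine (Q B)) g10 g12 (inP _ _ mB) (inP _ _ mB)) => h.
  exact: le_trans h ge0.
apply: le_trans h _; apply: ereal_sup_ubound; by exists B.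
Qed.
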